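(* Let $X$ be the Brady complex of $B_4$, let $R$ be a lozenge of $X$ and let $A$ be a vertex of $R$ at which the internal angle of $R$ is $2\pi/3$. Then there are exactly two lozenges $R_1,R_2$ of $X$ such that $R\cap R_1=R\cap R_2=\{A\}$ and such that each of $R\cup R_1$ and $R\cup R_2$ is contained in a flat hexagon of $X$.
   Context: Let $B_4=\langle a,b,c,d,e,f\mid ba=ae=eb,\ de=ec=cd,\ bc=cf=fb,\ df=fa=ad,\ ca=ac,\ ef=fe\rangle$ and $x=bac$. There are exactly sixteen factorizations $x=a_1a_2a_3$ with $a_i\in\{a,\dots,f\}$ (the cyclic length-3 subwords of $bcadefbacdfe$ and $faecfaecfaec$). Brady's complex $V$ has one vertex and one Euclidean tetrahedron per factorization, with edges $v_{i-1}v_i$ labelled $a_i$ (length 1), $v_0v_2,v_1v_3$ labelled $a_1a_2,a_2a_3$ (length $\sqrt2$), $v_0v_3$ labelled $x$ (length $\sqrt3$), glued along equally labelled edges; its universal cover $Y$ is CAT(0) and splits isometrically as $X\times\mathbb{R}$, the $\mathbb{R}$-factor being the direction of the central element $z=x^4$. The Brady complex $X$ is a 2-dimensional CAT(0) simplicial complex with Euclidean equilateral triangle faces; each vertex link is isomorphic to the graph obtained from the incidence graph of the Fano plane by deleting two adjacent vertices, with edge length $\pi/3$. A lozenge of $X$ is the union of two faces glued along an edge contained in exactly two faces; a flat hexagon is a subset isometric to a regular Euclidean hexagon made of faces. *)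

(* Defs.v *)
From Stdlib Require Import List Arith.
Import ListNotations.

Inductive gen := ga | gb | gc | gd | ge | gf.

(* Words in the free group: (true, l) = l, (false, l) = l^-1. *)
Definition word := list (bool * gen).
Definition w1 (l : gen) : word := [(true, l)].
Definition w2 (l m : gen) : word := [(true, l); (true, m)].

Definition relations : list (word * word) :=
  [ (w2 gb ga, w2 ga ge); (w2 ga ge, w2 ge gb);
    (w2 gd ge, w2 ge gc); (w2 ge gc, w2 gc gd);
    (w2 gb gc, w2 gc gf); (w2 gc gf, w2 gf gb);
    (w2 gd gf, w2 gf ga); (w2 gf ga, w2 ga gd);
    (w2 gc ga, w2 ga gc);
    (w2 ge gf, w2 gf ge) ].

Inductive geq : word -> word -> Prop :=
| geq_refl u : geq u u
| geq_sym u v : geq u v -> geq v u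
| geq_trans u v w : geq u v -> geq v w -> geq u w
| geq_ctx s t u v : geq u v -> geq (s ++ u ++ t) (s ++ v ++ t)
| geq_cancel1 l : geq [(true, l); (false, l)] []
| geq_cancel2 l : geq [(false, l); (true, l)] []
| geq_rel u v : In (u, v) relations -> geq u v.

Definition xword : word := [(true, gb); (true, ga); (true, gc)].
Fixpoint xpow (n : nat) : word :=
  match n with 0 => [] | S k => xword ++ xpow k end.

(* Vertices of X are the left cosets g<x> of B_4 (the projection of the
   vertex g of Y along the R-direction of z = x^4); two words represent
   the same vertex iff u = v x^k in B_4 for some integer k. *)
Definition veq (u v : word) : Prop :=
  exists n, geq (u ++ xpow n) v \/ geq u (v ++ xpow n).

(* The sixteen factorizations x = a1 a2 a3: the cyclic length-3 subwords
   of bcadefbacdfe and of faecfaecfaec. *)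
Definition factorizations : list (gen * gen * gen) :=
  [ (gb,gc,ga); (gc,ga,gd); (ga,gd,ge); (gd,ge,gf); (ge,gf,gb); (gf,gb,ga);
    (gb,ga,gc); (ga,gc,gd); (gc,gd,gf); (gd,gf,ge); (gf,ge,gb); (ge,gb,gc);
    (gf,ga,ge); (ga,ge,gc); (ge,gc,gf); (gc,gf,ga) ].

(* A face of X: projection of the tetrahedron of Y based at g with the
   factorization (a1,a2,a3); its vertices are g<x>, g a1<x>, g a1 a2<x>. *)
Definition face := (word * (gen * gen * gen))%type.
Definition is_face (F : face) : Prop := In (snd F) factorizations.

Definition fv0 (F : face) : word := fst F.
Definition fv1 (F : face) : word :=
  let '(_, (a1, _, _)) := F in fst F ++ w1 a1.
Definition fv2 (F : face) : word :=
  let '(_, (a1, a2, _)) := F in fst F ++ w2 a1 a2.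

Definition in_face (v : word) (F : face) : Prop :=
  veq v (fv0 F) \/ veq v (fv1 F) \/ veq v (fv2 F).

Definition feq (F G : face) : Prop := forall v, in_face v F <-> in_face v G.

Definition lozenge := (face * face)%type.

Definition is_lozenge (L : lozenge) : Prop :=
  is_face (fst L) /\ is_face (snd L) /\ ~ feq (fst L) (snd L) /\
  exists p q, ~ veq p q /\
    in_face p (fst L) /\ in_face q (fst L) /\
    in_face p (snd L) /\ in_face q (snd L) /\
    (forall G, is_face G -> in_face p G -> in_face q G ->
               feq G (fst L) \/ feq G (snd L)).

Definition leq (L M : lozenge) : Prop :=
  (feq (fst L) (fst M) /\ feq (snd L) (snd M)) \/
  (feq (fst L) (snd M) /\ feq (snd L) (fst M)).

Definition in_loz (v : word) (L : lozenge) : Prop :=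
  in_face v (fst L) \/ in_face v (snd L).

(* The internal angle of the lozenge L at its vertex A is 2pi/3 iff A lies
   in both faces of L (i.e. A is an endpoint of the gluing edge). *)
Definition wide_vertex (L : lozenge) (A : word) : Prop :=
  in_face A (fst L) /\ in_face A (snd L).

(* L ∩ M = {A} (intersection of closed subcomplexes = common vertices). *)
Definition meet_exactly (L M : lozenge) (A : word) : Prop :=
  in_loz A L /\ in_loz A M /\
  forall v, in_loz v L -> in_loz v M -> veq v A.

Definition hexagon := (word * (nat -> word))%type.

Definition hex_face (H : hexagon) (i : nat) (G : face) : Prop :=
  forall w, in_face w G <->
    (veq w (fst H) \/ veq w (snd H i) \/ veq w (snd H ((i + 1) mod 6))).

Definition is_flat_hexagon (H : hexagon) : Prop :=
  (forall i, i < 6 -> ~ veq (snd H i) (fst H)) /\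
  (forall i j, i < j -> j < 6 -> ~ veq (snd H i) (snd H j)) /\
  (forall i, i < 6 -> exists G, is_face G /\ hex_face H i G).

Definition face_in_hex (G : face) (H : hexagon) : Prop :=
  exists i, i < 6 /\ hex_face H i G.

Definition loz_in_hex (L : lozenge) (H : hexagon) : Prop :=
  face_in_hex (fst L) H /\ face_in_hex (snd L) H.

Definition hex_partner (R : lozenge) (A : word) (R1 : lozenge) : Prop :=
  meet_exactly R R1 A /\
  exists H, is_flat_hexagon H /\ loz_in_hex R H /\ loz_in_hex R1 H.

(* Main.v *)
Require Import Defs.
From Stdlib Require Import List Arith Lia Setoid Morphisms ZArith Bool.
Import ListNotations.

#[local] Instance geq_Equiv : Equivalence geq.
Proof. split; [exact geq_refl| exact geq_sym | exact geq_trans]. Qed.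

Lemma geq_app_l s u v : geq u v -> geq (s ++ u) (s ++ v).
Proof. intro H. pose proof (geq_ctx s [] u v H) as H0. rewrite !app_nil_r in H0. exact H0. Qed.
Lemma geq_app_r t u v : geq u v -> geq (u ++ t) (v ++ t).
Proof. intro H. exact (geq_ctx [] t u v H). Qed.

#[local] Instance geq_app_Proper : Proper (geq ==> geq ==> geq) (@app (bool*gen)).
Proof. intros u u' Hu v v' Hv. transitivity (u' ++ v).
  apply geq_app_r; auto. apply geq_app_l; auto. Qed.

Definition flip (p : bool * gen) : bool * gen := (negb (fst p), snd p).
Definition inv (w : word) : word := rev (map flip w).

Lemma geq_pair (a : bool * gen) : geq [a; flip a] [] /\ geq [flip a; a] [].
Proof. destruct a as [[|] l]; simpl; split; first [apply geq_cancel1 | apply geq_cancel2]. Qed.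

Lemma geq_inv_r w : geq (w ++ inv w) [].
Proof. induction w as [|a w IH]; simpl. reflexivity.
  unfold inv in *. simpl.
  replace (a :: w ++ rev (map flip w) ++ [flip a]) with ([a] ++ (w ++ rev (map flip w)) ++ [flip a])
    by (simpl; rewrite !app_assoc; reflexivity).
  rewrite IH. simpl. apply geq_pair. Qed.

Lemma geq_inv_l w : geq (inv w ++ w) [].
Proof. induction w as [|a w IH]; simpl. reflexivity.
  unfold inv in *. simpl.
  replace ((rev (map flip w) ++ [flip a]) ++ a :: w) with (rev (map flip w) ++ [flip a; a] ++ w)
    by (rewrite <- !app_assoc; reflexivity).
  rewrite (proj2 (geq_pair a)). simpl. exact IH. Qed.

Lemma geq_cancel_r u v t : geq (u ++ t) (v ++ t) -> geq u v.
Proof. intro H. assert (H0 : geq (u ++ t ++ inv t) (v ++ t ++ inv t))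
  by (rewrite !app_assoc, H; reflexivity).
  rewrite !geq_inv_r, !app_nil_r in H0. exact H0. Qed.

Lemma geq_cancel_l u v t : geq (t ++ u) (t ++ v) -> geq u v.
Proof. intro H. assert (H0 : geq ((inv t ++ t) ++ u) ((inv t ++ t) ++ v))
  by (rewrite <- !app_assoc, H; reflexivity).
  rewrite !geq_inv_l in H0. exact H0. Qed.

Lemma xpow_add n m : xpow (n + m) = xpow n ++ xpow m.
Proof. induction n; simpl. reflexivity. rewrite IHn. reflexivity. Qed.

Lemma veq_refl u : veq u u.
Proof. exists 0. left. simpl. rewrite app_nil_r. reflexivity. Qed.
Lemma veq_sym u v : veq u v -> veq v u.
Proof. intros [n [H|H]]; exists n; [right|left]; symmetry; auto. Qed.
Lemma veq_geq u v : geq u v -> veq u v.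
Proof. intro H. exists 0. left. simpl. rewrite app_nil_r. exact H. Qed.

Lemma veq_trans u v w : veq u v -> veq v w -> veq u w.
Proof.
  intros [n [H1|H1]] [m [H2|H2]].
  - exists (n + m). left. rewrite xpow_add, app_assoc, H1. exact H2.
  -
    assert (E : geq (u ++ xpow n) (w ++ xpow m)) by (rewrite H1; exact H2).
    destruct (le_ge_dec m n) as [Hle|Hle].
    + exists (n - m). left. apply (geq_cancel_r _ _ (xpow m)).
      rewrite <- app_assoc, <- xpow_add. replace (n - m + m) with n by lia. exact E.
    + exists (m - n). right. apply (geq_cancel_r _ _ (xpow n)).
      rewrite <- app_assoc, <- xpow_add. replace (m - n + n) with m by lia. exact E.
  -
    destruct (le_ge_dec n m) as [Hle|Hle].
    + exists (m - n). left. rewrite H1, <- app_assoc, <- xpow_add.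
      replace (n + (m - n)) with m by lia. exact H2.
    + exists (n - m). right. rewrite H1, <- H2, <- app_assoc, <- xpow_add.
      replace (m + (n - m)) with n by lia. reflexivity.
  - exists (m + n). right. rewrite H1, H2, <- app_assoc, <- xpow_add. reflexivity.
Qed.

#[local] Instance veq_Equiv : Equivalence veq.
Proof. split; [exact veq_refl | exact veq_sym | exact veq_trans]. Qed.

Lemma veq_app_l s u v : veq u v -> veq (s ++ u) (s ++ v).
Proof. intros [n [H|H]]; exists n; [left|right]; rewrite <- ?app_assoc; rewrite ?H; reflexivity. Qed.

Lemma veq_cancel_l s u v : veq (s ++ u) (s ++ v) -> veq u v.
Proof. intros [n [H|H]]; exists n; [left|right]; apply (geq_cancel_l _ _ s);
  rewrite ?app_assoc in *; exact H. Qed.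
Definition toW (w : list gen) : word := map (fun l => (true, l)) w.
Lemma toW_app u v : toW (u ++ v) = toW u ++ toW v.
Proof. apply map_app. Qed.

Definition gen_eq_dec (x y : gen) : {x = y} + {x <> y}.
Proof. decide equality. Defined.
Definition lg_eq_dec := list_eq_dec gen_eq_dec.
Definition lg_eqb (u v : list gen) : bool := if lg_eq_dec u v then true else false.
Lemma lg_eqb_true u v : lg_eqb u v = true -> u = v.
Proof. unfold lg_eqb. destruct (lg_eq_dec u v); congruence. Qed.

Definition prels : list (list gen * list gen) :=
  [ ([gb;ga],[ga;ge]); ([ga;ge],[ge;gb]); ([gd;ge],[ge;gc]); ([ge;gc],[gc;gd]);
    ([gb;gc],[gc;gf]); ([gc;gf],[gf;gb]); ([gd;gf],[gf;ga]); ([gf;ga],[ga;gd]);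
    ([gc;ga],[ga;gc]); ([ge;gf],[gf;ge]);
    ([ga;ge],[gb;ga]); ([ge;gb],[ga;ge]); ([ge;gc],[gd;ge]); ([gc;gd],[ge;gc]);
    ([gc;gf],[gb;gc]); ([gf;gb],[gc;gf]); ([gf;ga],[gd;gf]); ([ga;gd],[gf;ga]);
    ([ga;gc],[gc;ga]); ([gf;ge],[ge;gf]) ].

Definition bg_eq_dec (x y : bool * gen) : {x = y} + {x <> y}.
Proof. decide equality; [apply gen_eq_dec | apply bool_dec]. Defined.
Definition wp_eq_dec (x y : word * word) : {x = y} + {x <> y}.
Proof. decide equality; apply (list_eq_dec bg_eq_dec). Defined.
Definition inrel (p : word * word) : bool :=
  existsb (fun q => if wp_eq_dec p q then true else false) relations.
Lemma inrel_sound p : inrel p = true -> In p relations.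
Proof. unfold inrel. intro H. apply existsb_exists in H. destruct H as [q [Hq E]].
  destruct (wp_eq_dec p q); congruence. Qed.
Lemma prels_ok : forallb (fun p => inrel (toW (fst p), toW (snd p)) || inrel (toW (snd p), toW (fst p))) prels = true.
Proof. vm_compute. reflexivity. Qed.
Lemma prels_sound u v : In (u, v) prels -> geq (toW u) (toW v).
Proof.
  intro H. pose proof (proj1 (forallb_forall _ _) prels_ok _ H) as E. simpl in E.
  apply orb_true_iff in E. destruct E as [E|E]; apply inrel_sound in E.
  - apply geq_rel, E.
  - apply geq_sym, geq_rel, E.
Qed.

Definition lookup (a : list gen) : list (list gen) :=
  map snd (filter (fun p => lg_eqb (fst p) a) prels).

Lemma lookup_sound a r : In r (lookup a) -> In (a, r) prels.
Proof.
  unfold lookup. intro H. apply in_map_iff in H. destruct H as [[p1 p2] [E Hp]].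
  apply filter_In in Hp. destruct Hp as [Hp Heq].
  apply lg_eqb_true in Heq. simpl in E, Heq. subst. exact Hp.
Qed.

Fixpoint rw1 (w : list gen) : list (list gen) :=
  match w with
  | a :: ((b :: t) as t') =>
      map (fun r => r ++ t) (lookup [a; b]) ++ map (cons a) (rw1 t')
  | _ => []
  end.

Lemma rw1_cons a b t : rw1 (a::b::t) = map (fun r => r ++ t) (lookup [a; b]) ++ map (cons a) (rw1 (b::t)).
Proof. reflexivity. Qed.

Lemma rw1_sound w v : In v (rw1 w) -> geq (toW w) (toW v).
Proof.
  induction w as [|a w IH] in v |- *. simpl; contradiction.
  destruct w as [|b t]. simpl; contradiction.
  intro H. rewrite rw1_cons in H. apply in_app_or in H. destruct H as [H|H].
  - apply in_map_iff in H. destruct H as [r [<- Hp]].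
    apply lookup_sound, prels_sound in Hp. rewrite toW_app.
    exact (geq_app_r (toW t) _ _ Hp).
  - apply in_map_iff in H. destruct H as [v' [<- Hv']].
    apply IH in Hv'. exact (geq_app_l [(true,a)] _ _ Hv').
Qed.

Fixpoint clos (k : nat) (S : list (list gen)) : list (list gen) :=
  match k with
  | 0 => S
  | S k' => clos k' (nodup lg_eq_dec (S ++ flat_map rw1 S))
  end.

Lemma clos_sound u k : forall S, (forall w, In w S -> geq (toW u) (toW w)) ->
  forall w, In w (clos k S) -> geq (toW u) (toW w).
Proof.
  induction k as [|k IH]; simpl; intros S HS. exact HS.
  apply IH. intros w Hw. apply nodup_In in Hw. apply in_app_or in Hw.
  destruct Hw as [Hw|Hw]. auto.
  apply in_flat_map in Hw. destruct Hw as [w' [Hw' Hw]].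
  rewrite (HS w' Hw'). apply rw1_sound, Hw.
Qed.

Definition equivb (u v : list gen) : bool := existsb (lg_eqb v) (clos 12 [u]).
Lemma existsb_sound u v L : (forall w, In w L -> geq (toW u) (toW w)) ->
  existsb (lg_eqb v) L = true -> geq (toW u) (toW v).
Proof.
  intros HL H. apply existsb_exists in H. destruct H as [w [Hw He]].
  apply lg_eqb_true in He. subst w. apply HL, Hw.
Qed.

Lemma equivb_sound u v : equivb u v = true -> geq (toW u) (toW v).
Proof.
  intro H. refine (existsb_sound u v (clos 12 [u]) _ H).
  apply (clos_sound u 12 [u]). intros w [<-|[]]. reflexivity.
Qed.

Definition xl : list gen := [gb; ga; gc].
Fixpoint xs (n : nat) : list gen := match n with 0 => [] | S k => xl ++ xs k end.
Lemma toW_xs n : toW (xs n) = xpow n.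
Proof. induction n; simpl. reflexivity. rewrite IHn. reflexivity. Qed.

Definition veqpb (u v : list gen) : bool :=
  existsb (fun n => (if length u + 3 * n =? length v then equivb (u ++ xs n) v else false)
                 || (if length v + 3 * n =? length u then equivb u (v ++ xs n) else false)) [0;1;2].

Lemma veqpb_sound u v : veqpb u v = true -> veq (toW u) (toW v).
Proof.
  unfold veqpb. intro H. apply existsb_exists in H. destruct H as [n [_ H]].
  apply orb_true_iff in H. exists n. destruct H as [H|H];
  [destruct (length u + 3 * n =? length v) | destruct (length v + 3 * n =? length u)];
  try discriminate; apply equivb_sound in H; rewrite toW_app, toW_xs in H; auto.
Qed.

Definition sig (a : gen) : gen :=
  match a with ga => ge | gb => gd | gc => gf | gd => gb | ge => gc | gf => ga end.
Definition siginv (a : gen) : gen :=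
  match a with ge => ga | gd => gb | gf => gc | gb => gd | gc => ge | ga => gf end.

Lemma x_comm1 a : geq (xword ++ toW [a]) (toW [sig a] ++ xword).
Proof.
  change xword with (toW xl). rewrite <- !toW_app. apply equivb_sound.
  destruct a; vm_compute; reflexivity.
Qed.

Lemma x_comm_w v : geq (xword ++ toW v) (toW (map sig v) ++ xword).
Proof.
  induction v as [|a v IH].
  - change (geq (xword ++ []) ([] ++ xword)). rewrite app_nil_r. reflexivity.
  - change (geq (xword ++ toW [a] ++ toW v) (toW [sig a] ++ toW (map sig v) ++ xword)).
    rewrite app_assoc, x_comm1, <- app_assoc, IH. reflexivity.
Qed.

Definition smap (n : nat) (v : list gen) : list gen := map (Nat.iter n sig) v.

Lemma xpow_comm n v : geq (xpow n ++ toW v) (toW (smap n v) ++ xpow n).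
Proof.
  induction n as [|n IH].
  - assert (E : smap 0 v = v) by (unfold smap; induction v; simpl; congruence).
    rewrite E. change (geq ([] ++ toW v) (toW v ++ [])). rewrite app_nil_r. reflexivity.
  - change (geq ((xword ++ xpow n) ++ toW v) (toW (smap (S n) v) ++ xword ++ xpow n)).
    rewrite <- app_assoc, IH, app_assoc, x_comm_w, <- app_assoc.
    unfold smap. rewrite map_map. reflexivity.
Qed.

Lemma iter4 q a : Nat.iter (4 * q) sig a = a.
Proof. induction q. reflexivity. replace (4 * S q) with (4 + 4 * q) by lia.
  rewrite Nat.iter_add, IHq. destruct a; reflexivity. Qed.

Lemma iter_mod n a : Nat.iter n sig a = Nat.iter (n mod 4) sig a.
Proof. transitivity (Nat.iter (n mod 4 + 4 * (n / 4)) sig a).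
  - f_equal. pose proof (Nat.div_mod_eq n 4). lia.
  - rewrite Nat.iter_add, iter4. reflexivity. Qed.

Lemma smap_mod n v : smap n v = smap (n mod 4) v.
Proof. unfold smap. apply map_ext. apply iter_mod. Qed.

Lemma smap_add n m v : smap n (smap m v) = smap (n + m) v.
Proof. unfold smap. rewrite map_map. apply map_ext. intro a. rewrite Nat.iter_add. reflexivity. Qed.

Lemma key V u : veq V u -> exists r, r < 4 /\ forall v, veq (V ++ toW (smap r v)) (u ++ toW v).
Proof.
  intros [n [H|H]].
  - exists (n mod 4). split. apply Nat.mod_upper_bound; lia.
    intro v. rewrite <- smap_mod. exists n. left. rewrite <- H.
    rewrite <- app_assoc, <- xpow_comm, app_assoc. reflexivity.
  - exists ((4 - n mod 4) mod 4). split. apply Nat.mod_upper_bound; lia.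
    intro v. exists n. right. rewrite H. rewrite <- !app_assoc, xpow_comm.
    rewrite smap_add, smap_mod.
    replace ((n + (4 - n mod 4) mod 4) mod 4) with 0.
    + unfold smap; simpl; rewrite map_id; reflexivity.
    + pose proof (Nat.mod_upper_bound n 4).
      rewrite Nat.add_mod by lia. rewrite Nat.mod_mod by lia.
      assert (n mod 4 = 0 \/ n mod 4 = 1 \/ n mod 4 = 2 \/ n mod 4 = 3) as Hc by lia.
      destruct Hc as [Hc|[Hc|[Hc|Hc]]]; rewrite Hc; reflexivity.
Qed.
(* ---------- invariant: abelianisation and S_4 image ---------- *)
Definition state := (nat * nat * nat * nat)%type.
Definition swp (l : gen) (s : state) : state :=
  let '(x0, x1, x2, x3) := s in
  match l with
  | ga => (x1, x0, x2, x3)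
  | gb => (x2, x1, x0, x3)
  | gc => (x0, x1, x3, x2)
  | gd => (x0, x3, x2, x1)
  | ge => (x0, x2, x1, x3)
  | gf => (x3, x1, x2, x0)
  end.
Fixpoint act (w : word) (s : state) : state :=
  match w with [] => s | p :: w' => act w' (swp (snd p) s) end.
Fixpoint ab (w : word) : Z :=
  match w with [] => 0%Z | p :: w' => ((if fst p then 1 else -1) + ab w')%Z end.

Lemma act_app u v s : act (u ++ v) s = act v (act u s).
Proof. revert s; induction u; simpl; auto. Qed.
Lemma ab_app u v : ab (u ++ v) = (ab u + ab v)%Z.
Proof. induction u; simpl; auto. rewrite IHu. lia. Qed.

Lemma geq_inv u v : geq u v -> ab u = ab v /\ forall s, act u s = act v s.
Proof.
  induction 1 as [u|u v _ [IH1 IH2]|u v w _ [IH1 IH2] _ [IH3 IH4]|s t u v _ [IH1 IH2]|l|l|u v H].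
  - split; auto.
  - split; auto.
  - split. congruence. intro s; rewrite IH2; auto.
  - split. rewrite !ab_app, IH1; reflexivity. intro s0. rewrite !act_app, IH2. reflexivity.
  - split. simpl; lia. intros [[[x0 x1] x2] x3]; destruct l; reflexivity.
  - split. simpl; lia. intros [[[x0 x1] x2] x3]; destruct l; reflexivity.
  - unfold relations in H. simpl in H.
    repeat (destruct H as [H|H]; [injection H as <- <-; split; [reflexivity|
       intros [[[x0 x1] x2] x3]; reflexivity] |]).
    contradiction.
Qed.

Lemma ab_toW u : ab (toW u) = Z.of_nat (length u).
Proof. induction u; [reflexivity|]. change (ab (toW (a::u))) with (1 + ab (toW u))%Z.
  rewrite IHu. cbn [length]. rewrite Nat2Z.inj_succ. lia. Qed.
Lemma ab_xpow n : ab (xpow n) = (3 * Z.of_nat n)%Z.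
Proof. induction n; [reflexivity|]. change (ab (xpow (S n))) with (1 + (1 + (1 + ab (xpow n))))%Z.
  rewrite IHn, Nat2Z.inj_succ. lia. Qed.

Definition s0 : state := (0, 1, 2, 3).

Lemma veq_small u v : veq (toW u) (toW v) -> length u <= 2 -> length v <= 2 ->
  length u = length v /\ act (toW u) s0 = act (toW v) s0.
Proof.
  intros [n [H|H]] Hu Hv; apply geq_inv in H; destruct H as [H1 H2];
  rewrite ?ab_app, !ab_toW, ?ab_xpow in H1.
  - assert (n = 0) by lia. subst n. rewrite <- H2, app_nil_r. split; auto; lia.
  - assert (n = 0) by lia. subst n. rewrite H2, app_nil_r. split; auto; lia.
Qed.

Definition nodes : list (list gen) :=
  [[]; [ga]; [gb]; [gc]; [gd]; [ge]; [gf]; [gb;ga]; [gd;ge]; [gb;gc]; [gd;gf]; [gc;ga]; [ge;gf]].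
Definition node (k : nat) : list gen := nth k nodes [].
Definition Nd (A : word) (k : nat) : word := A ++ toW (node k).

Definition steqb (s t : state) : bool :=
  let '(a0,a1,a2,a3) := s in let '(b0,b1,b2,b3) := t in
  (a0 =? b0) && (a1 =? b1) && (a2 =? b2) && (a3 =? b3).
Lemma steqb_refl s : steqb s s = true.
Proof. destruct s as [[[a b] c] d]. simpl. rewrite !Nat.eqb_refl. reflexivity. Qed.

Definition distb : bool :=
  forallb (fun k => forallb (fun l => (k =? l) || negb ((length (node k) =? length (node l))
       && steqb (act (toW (node k)) s0) (act (toW (node l)) s0))) (seq 0 13)) (seq 0 13).
Lemma distb_ok : distb = true. Proof. vm_compute. reflexivity. Qed.
Strategy expand [distb].

Lemma node_len k : length (node k) <= 2.
Proof. unfold node. do 13 (destruct k as [|k]; [simpl; lia|]). destruct k; simpl; lia. Qed.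

Lemma in_seq_lt k n : k < n -> In k (seq 0 n).
Proof. intro. apply in_seq. lia. Qed.

Lemma node_dist A k l : k < 13 -> l < 13 -> veq (Nd A k) (Nd A l) -> k = l.
Proof.
  intros Hk Hl H. apply veq_cancel_l in H. apply veq_small in H; try apply node_len.
  destruct H as [H1 H2].
  pose proof distb_ok as D. unfold distb in D.
  rewrite forallb_forall in D. specialize (D k (in_seq_lt _ _ Hk)).
  rewrite forallb_forall in D. specialize (D l (in_seq_lt _ _ Hl)).
  rewrite H1, H2, Nat.eqb_refl, steqb_refl in D. simpl in D.
  rewrite orb_false_r in D. apply Nat.eqb_eq, D.
Qed.
Definition Tl : list (list nat) :=
  [[0;2;9];[0;3;11];[0;1;10];[0;4;8];[0;5;12];[0;6;9];[0;2;7];[0;1;11];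
   [0;3;8];[0;4;10];[0;6;12];[0;5;7];[0;6;10];[0;1;7];[0;5;8];[0;3;9]].
Definition T (m : nat) : list nat := nth m Tl [].

Definition fl (f : gen * gen * gen) : list gen := let '(a1, a2, a3) := f in [a1; a2; a3].

Lemma in_face_char v g f : in_face v (g, f) <->
  exists j, j < 3 /\ veq v (g ++ toW (firstn j (fl f))).
Proof.
  destruct f as [[a1 a2] a3]. unfold in_face, fv0, fv1, fv2. simpl. split.
  - intros [H|[H|H]]; [exists 0|exists 1|exists 2]; simpl; (split; [lia|]);
    rewrite ?app_nil_r; exact H.
  - intros [j [Hj H]]. destruct j as [|[|[|j]]]; simpl in H; try lia.
    + left. rewrite app_nil_r in H. exact H.
    + right; left; exact H.
    + right; right; exact H.
Qed.

Definition vset (A : word) (G : face) (m : nat) : Prop :=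
  forall v, in_face v G <-> exists k, In k (T m) /\ veq v (Nd A k).

Definition cls (u : list gen) : nat :=
  match find (fun k => veqpb u (node k)) (seq 0 13) with Some k => k | None => 99 end.

Definition wji (f : gen * gen * gen) (j i : nat) : list gen :=
  if j <=? i then skipn j (firstn i (fl f))
  else skipn j (fl f) ++ map siginv (firstn i (fl f)).

Definition memb (k : nat) (l : list nat) : bool := existsb (Nat.eqb k) l.
Lemma memb_In k l : memb k l = true <-> In k l.
Proof. unfold memb. rewrite existsb_exists. split.
  - intros [x [Hx E]]. apply Nat.eqb_eq in E. subst. exact Hx.
  - intro H. exists k. split; auto. apply Nat.eqb_refl. Qed.

Definition seteqb (l1 l2 : list nat) : bool :=
  forallb (fun x => memb x l2) l1 && forallb (fun x => memb x l1) l2.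
Lemma seteqb_ok l1 l2 : seteqb l1 l2 = true -> forall x, In x l1 <-> In x l2.
Proof. unfold seteqb. intros H x. apply andb_true_iff in H. destruct H as [H1 H2].
  rewrite forallb_forall in H1, H2. split; intro Hx.
  - apply memb_In, H1, Hx.
  - apply memb_In, H2, Hx. Qed.

Definition faceok (f : gen * gen * gen) : bool :=
  forallb (fun j =>
    forallb (fun i => veqpb (firstn j (fl f) ++ wji f j i) (firstn i (fl f))) [0;1;2]
    && forallb (fun r =>
         forallb (fun i => veqpb (smap r (wji f j i)) (node (cls (smap r (wji f j i))))) [0;1;2]
         && existsb (fun m => seteqb (map (fun i => cls (smap r (wji f j i))) [0;1;2]) (T m))
                    (seq 0 16)) [0;1;2;3]) [0;1;2].

Lemma facesok : forallb faceok factorizations = true.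
Proof. vm_compute. reflexivity. Qed.

Lemma lt3 j : j < 3 -> In j [0;1;2].
Proof. intro. destruct j as [|[|[|j]]]; simpl; auto; lia. Qed.
Lemma lt4 j : j < 4 -> In j [0;1;2;3].
Proof. intro. destruct j as [|[|[|[|j]]]]; simpl; auto; lia. Qed.

Lemma veq_pos s u v : veqpb u v = true -> veq (s ++ toW u) (s ++ toW v).
Proof. intro H. apply veq_app_l, veqpb_sound, H. Qed.

Lemma faces_at A G : is_face G -> in_face A G -> exists m, m < 16 /\ vset A G m.
Proof.
  destruct G as [g f]. unfold is_face. simpl. intros Hf HA.
  apply in_face_char in HA. destruct HA as [j [Hj HA]].
  apply key in HA. destruct HA as [r [Hr HA]].
  pose proof (proj1 (forallb_forall _ _) facesok f Hf) as Ef. unfold faceok in Ef.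
  rewrite forallb_forall in Ef. specialize (Ef j (lt3 _ Hj)).
  apply andb_true_iff in Ef. destruct Ef as [E1 E2].
  rewrite forallb_forall in E1, E2. specialize (E2 r (lt4 _ Hr)).
  apply andb_true_iff in E2. destruct E2 as [E2 E3].
  rewrite forallb_forall in E2. apply existsb_exists in E3. destruct E3 as [m [Hm E3]].
  exists m. split. apply in_seq in Hm. lia.
  pose proof (seteqb_ok _ _ E3) as S.
  assert (V : forall i, In i [0;1;2] ->
     veq (g ++ toW (firstn i (fl f))) (Nd A (cls (smap r (wji f j i))))).
  { intros i Hi. specialize (E1 i Hi). specialize (E2 i Hi).
    apply (veq_pos g) in E1. rewrite toW_app, app_assoc in E1.
    apply (veq_pos A) in E2. unfold Nd.
    rewrite <- E1, <- (HA (wji f j i)). exact E2. }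
  intro v. rewrite in_face_char. split.
  - intros [i [Hi Hv]]. exists (cls (smap r (wji f j i))). split.
    + apply S. apply (in_map (fun i => cls (smap r (wji f j i)))), lt3, Hi.
    + rewrite Hv. apply V, lt3, Hi.
  - intros [k [Hk Hv]]. apply S in Hk. apply in_map_iff in Hk. destruct Hk as [i [<- Hi]].
    exists i. split. simpl in Hi. destruct Hi as [<-|[<-|[<-|[]]]]; lia.
    rewrite Hv. symmetry. apply V, Hi.
Qed.
Definition fdef : gen * gen * gen := (ga, ga, ga).
Definition Cface (A : word) (m : nat) : face := (A, nth m factorizations fdef).

Definition cfok : bool :=
  forallb (fun m => (length (T m) =? 3) &&
     forallb (fun j => veqpb (firstn j (fl (nth m factorizations fdef))) (node (nth j (T m) 0))) [0;1;2])
   (seq 0 16).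
Lemma cfok_ok : cfok = true. Proof. vm_compute. reflexivity. Qed.
Strategy expand [cfok].

Definition tbasic : bool :=
  forallb (fun m => memb 0 (T m) && forallb (fun k => k <? 13) (T m)) (seq 0 16).
Lemma tbasic_ok : tbasic = true. Proof. vm_compute. reflexivity. Qed.
Strategy expand [tbasic].

Lemma T0 m : m < 16 -> In 0 (T m).
Proof. intro Hm. pose proof tbasic_ok as E. unfold tbasic in E. rewrite forallb_forall in E.
  specialize (E m (in_seq_lt _ _ Hm)). apply andb_true_iff in E. apply memb_In, E. Qed.
Lemma Tlt m k : m < 16 -> In k (T m) -> k < 13.
Proof. intros Hm Hk. pose proof tbasic_ok as E. unfold tbasic in E. rewrite forallb_forall in E.
  specialize (E m (in_seq_lt _ _ Hm)). apply andb_true_iff in E. destruct E as [_ E].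
  rewrite forallb_forall in E. apply Nat.ltb_lt, E, Hk. Qed.

Lemma In3 (l : list nat) k : length l = 3 -> (In k l <-> exists j, j < 3 /\ nth j l 0 = k).
Proof. intro Hl. destruct l as [|x0 [|x1 [|x2 [|x3 l]]]]; simpl in Hl; try lia. simpl. split.
  - intros [<-|[<-|[<-|[]]]]; [exists 0|exists 1|exists 2]; simpl; split; auto; lia.
  - intros [j [Hj <-]]. destruct j as [|[|[|j]]]; simpl; auto; lia. Qed.

Lemma Cface_face A m : m < 16 -> is_face (Cface A m).
Proof. intro. unfold is_face, Cface. cbn [snd]. apply nth_In. change (length factorizations) with 16. lia. Qed.

Lemma Cface_vset A m : m < 16 -> vset A (Cface A m) m.
Proof.
  intro Hm. pose proof cfok_ok as E. unfold cfok in E. rewrite forallb_forall in E.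
  specialize (E m (in_seq_lt _ _ Hm)). apply andb_true_iff in E. destruct E as [E1 E2].
  apply Nat.eqb_eq in E1. rewrite forallb_forall in E2.
  intro v. unfold Cface. rewrite in_face_char. split.
  - intros [j [Hj Hv]]. exists (nth j (T m) 0). split.
    + apply nth_In. lia.
    + rewrite Hv. apply veq_pos, E2, lt3, Hj.
  - intros [k [Hk Hv]]. apply (In3 _ _ E1) in Hk. destruct Hk as [j [Hj <-]].
    exists j. split; auto. rewrite Hv. symmetry. apply veq_pos, E2, lt3, Hj.
Qed.

Definition uniqb : bool :=
  forallb (fun m => forallb (fun m' => (m =? m') || negb (forallb (fun k => memb k (T m')) (T m)))
    (seq 0 16)) (seq 0 16).
Lemma uniqb_ok : uniqb = true. Proof. vm_compute. reflexivity. Qed.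
Strategy expand [uniqb].

Lemma vset_class A G m v : vset A G m -> in_face v G -> exists k, In k (T m) /\ veq v (Nd A k).
Proof. intros V H. apply V, H. Qed.

Lemma vset_mem A G m k : vset A G m -> In k (T m) -> in_face (Nd A k) G.
Proof. intros V H. apply V. exists k. split; auto. reflexivity. Qed.

Lemma class_eq A m m' k k' : m < 16 -> m' < 16 -> In k (T m) -> In k' (T m') ->
  veq (Nd A k) (Nd A k') -> k = k'.
Proof. intros Hm Hm' Hk Hk' E. apply (node_dist A); auto. apply (Tlt m); auto. apply (Tlt m'); auto. Qed.

Lemma vset_unique A G m m' : m < 16 -> m' < 16 -> vset A G m -> vset A G m' -> m = m'.
Proof.
  intros Hm Hm' V V'.
  assert (I : forall k, In k (T m) -> In k (T m')).
  { intros k Hk. pose proof (vset_mem _ _ _ _ V Hk) as H1. apply V' in H1.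
    destruct H1 as [k' [Hk' E]]. rewrite (class_eq A m m' k k'); auto. }
  pose proof uniqb_ok as U. unfold uniqb in U. rewrite forallb_forall in U.
  specialize (U m (in_seq_lt _ _ Hm)). rewrite forallb_forall in U.
  specialize (U m' (in_seq_lt _ _ Hm')). apply orb_true_iff in U. destruct U as [U|U].
  apply Nat.eqb_eq, U.
  assert (forallb (fun k => memb k (T m')) (T m) = true) as C.
  { apply forallb_forall. intros k Hk. apply memb_In, I, Hk. }
  rewrite C in U. discriminate.
Qed.

Lemma feq_of_vset A G H m : vset A G m -> vset A H m -> feq G H.
Proof. intros V W v. rewrite (V v), (W v). reflexivity. Qed.

Lemma vset_of_feq A G H m : feq G H -> vset A G m -> vset A H m.
Proof. intros E V v. rewrite <- (E v). apply V. Qed.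

Lemma Nd0 A : veq (Nd A 0) A.
Proof. apply veq_geq. unfold Nd. simpl. rewrite app_nil_r. reflexivity. Qed.

Lemma in_face_veq v w G : veq v w -> in_face v G -> in_face w G.
Proof. intros E [H|[H|H]]; unfold in_face; [left|right;left|right;right];
  rewrite <- E; exact H. Qed.

Lemma A_in A G m : m < 16 -> vset A G m -> in_face A G.
Proof. intros Hm V. apply (in_face_veq (Nd A 0)). apply Nd0. apply (vset_mem _ _ _ _ V), T0, Hm. Qed.

Definition lozb (i j : nat) : bool :=
  negb (i =? j) && existsb (fun b => negb (b =? 0) && memb b (T j) &&
     forallb (fun m => negb (memb b (T m)) || (m =? i) || (m =? j)) (seq 0 16)) (T i).

Definition twob : bool :=
  forallb (fun i => forallb (fun j => (i =? j) || forallb (fun a => forallb (fun b =>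
     negb (memb a (T i) && memb a (T j) && memb b (T i) && memb b (T j) && negb (a =? b)
           && negb (a =? 0) && negb (b =? 0))) (seq 0 13)) (seq 0 13)) (seq 0 16)) (seq 0 16).
Lemma twob_ok : twob = true. Proof. vm_compute. reflexivity. Qed.
Strategy expand [twob].

Lemma two_common i j a b : i < 16 -> j < 16 -> i <> j -> In a (T i) -> In a (T j) ->
  In b (T i) -> In b (T j) -> a <> b -> a = 0 \/ b = 0.
Proof.
  intros Hi Hj Hij Ha1 Ha2 Hb1 Hb2 Hab.
  destruct (Nat.eq_dec a 0) as [|Ha]; auto. destruct (Nat.eq_dec b 0) as [|Hb]; auto. exfalso.
  pose proof twob_ok as E. unfold twob in E. rewrite forallb_forall in E.
  specialize (E i (in_seq_lt _ _ Hi)). rewrite forallb_forall in E.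
  specialize (E j (in_seq_lt _ _ Hj)). apply orb_true_iff in E. destruct E as [E|E].
  apply Nat.eqb_eq in E. contradiction.
  rewrite forallb_forall in E. specialize (E a (in_seq_lt _ _ (Tlt _ _ Hi Ha1))).
  rewrite forallb_forall in E. specialize (E b (in_seq_lt _ _ (Tlt _ _ Hi Hb1))).
  apply memb_In in Ha1, Ha2, Hb1, Hb2. rewrite Ha1, Ha2, Hb1, Hb2 in E.
  apply Nat.eqb_neq in Hab, Ha, Hb. rewrite Hab, Ha, Hb in E. discriminate.
Qed.

Lemma loz_core F1 F2 A i j p q b : i < 16 -> j < 16 -> i <> j ->
  vset A F1 i -> vset A F2 j -> b <> 0 -> In b (T i) -> In b (T j) ->
  veq p (Nd A 0) -> veq q (Nd A b) ->
  (forall G, is_face G -> in_face p G -> in_face q G -> feq G F1 \/ feq G F2) ->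
  lozb i j = true.
Proof.
  intros Hi Hj Hij V1 V2 Hb Hbi Hbj Hp Hq Hall.
  unfold lozb. apply andb_true_iff. split.
  - apply negb_true_iff, Nat.eqb_neq, Hij.
  - apply existsb_exists. exists b. split; auto.
    apply andb_true_intro. split. apply andb_true_intro. split.
    apply negb_true_iff, Nat.eqb_neq, Hb. apply memb_In, Hbj.
    apply forallb_forall. intros m Hm. apply in_seq in Hm.
    destruct (memb b (T m)) eqn:Eb; simpl; auto.
    apply memb_In in Eb.
    assert (Hf : feq (Cface A m) F1 \/ feq (Cface A m) F2).
    { apply Hall. apply Cface_face; lia.
      - apply (in_face_veq (Nd A 0)). symmetry; auto. apply (vset_mem _ _ m). apply Cface_vset; lia. apply T0; lia.
      - apply (in_face_veq (Nd A b)). symmetry; auto. apply (vset_mem _ _ m). apply Cface_vset; lia. auto. }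
    destruct Hf as [Hf|Hf]; apply (vset_of_feq A _ _ m) in Hf; try (apply Cface_vset; lia).
    + rewrite (vset_unique A F1 m i); try lia; auto. rewrite Nat.eqb_refl. auto.
    + rewrite (vset_unique A F2 m j); try lia; auto. rewrite Nat.eqb_refl. apply orb_true_r.
Qed.

Lemma shared_class A F1 F2 i j p : i < 16 -> j < 16 -> vset A F1 i -> vset A F2 j ->
  in_face p F1 -> in_face p F2 -> exists k, In k (T i) /\ In k (T j) /\ veq p (Nd A k).
Proof.
  intros Hi Hj V1 V2 H1 H2. apply V1 in H1. apply V2 in H2.
  destruct H1 as [k [Hk E]]. destruct H2 as [k' [Hk' E']].
  exists k. repeat split; auto. rewrite (class_eq A i j k k'); auto. rewrite <- E, <- E'. reflexivity.
Qed.

Lemma loz_abs R A : is_lozenge R -> wide_vertex R A ->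
  exists i j, i < 16 /\ j < 16 /\ vset A (fst R) i /\ vset A (snd R) j /\ lozb i j = true.
Proof.
  destruct R as [F1 F2]. unfold is_lozenge, wide_vertex. simpl.
  intros [Hf1 [Hf2 [Hne [p [q [Hpq [Hp1 [Hq1 [Hp2 [Hq2 Hall]]]]]]]]]] [HA1 HA2].
  destruct (faces_at A F1 Hf1 HA1) as [i [Hi V1]].
  destruct (faces_at A F2 Hf2 HA2) as [j [Hj V2]].
  exists i, j. split; [auto|split; [auto|split; [auto|split; [auto|]]]].
  assert (Hij : i <> j).
  { intro E. subst j. apply Hne. apply (feq_of_vset A _ _ i); auto. }
  destruct (shared_class A F1 F2 i j p Hi Hj V1 V2 Hp1 Hp2) as [cp [Cp1 [Cp2 Ep]]].
  destruct (shared_class A F1 F2 i j q Hi Hj V1 V2 Hq1 Hq2) as [cq [Cq1 [Cq2 Eq]]].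
  assert (Hc : cp <> cq). { intro E. subst cq. apply Hpq. rewrite Ep, Eq. reflexivity. }
  destruct (two_common i j cp cq Hi Hj Hij Cp1 Cp2 Cq1 Cq2 Hc) as [E|E].
  - subst cp. apply (loz_core F1 F2 A i j p q cq); auto.
  - subst cq. apply (loz_core F1 F2 A i j q p cp); auto.
    all: try (intros G HG H1 H2; apply Hall; auto).
Qed.

Lemma loz_conc A i j : i < 16 -> j < 16 -> lozb i j = true -> is_lozenge (Cface A i, Cface A j).
Proof.
  intros Hi Hj L. unfold lozb in L. apply andb_true_iff in L. destruct L as [L1 L2].
  apply negb_true_iff, Nat.eqb_neq in L1.
  apply existsb_exists in L2. destruct L2 as [b [Hbi L2]].
  apply andb_true_iff in L2. destruct L2 as [L2 L3]. apply andb_true_iff in L2.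
  destruct L2 as [Hb Hbj]. apply negb_true_iff, Nat.eqb_neq in Hb. apply memb_In in Hbj.
  rewrite forallb_forall in L3.
  pose proof (Cface_vset A i Hi) as Vi. pose proof (Cface_vset A j Hj) as Vj.
  unfold is_lozenge. simpl. split. apply Cface_face; auto. split. apply Cface_face; auto.
  split. { intro E. apply L1. apply (vset_unique A (Cface A j) i j); auto.
           apply (vset_of_feq A (Cface A i)); auto. }
  exists (Nd A 0), (Nd A b). split.
  { intro E. apply Hb. symmetry. apply (node_dist A); [lia| apply (Tlt i); auto | exact E]. }
  split. apply (vset_mem _ _ _ _ Vi), T0; auto.
  split. apply (vset_mem _ _ _ _ Vi); auto.
  split. apply (vset_mem _ _ _ _ Vj), T0; auto.
  split. apply (vset_mem _ _ _ _ Vj); auto.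
  intros G HG H1 H2.
  assert (HA : in_face A G) by (apply (in_face_veq (Nd A 0)); [apply Nd0|auto]).
  destruct (faces_at A G HG HA) as [m [Hm V]].
  apply V in H2. destruct H2 as [k [Hk E]].
  assert (k = b) by (symmetry; apply (class_eq A j m b k); auto).
  subst k. specialize (L3 m (in_seq_lt _ _ Hm)).
  apply memb_In in Hk. rewrite Hk in L3. simpl in L3. apply orb_true_iff in L3.
  destruct L3 as [E3|E3]; apply Nat.eqb_eq in E3; subst m; [left|right];
    apply (feq_of_vset A _ _ _ V); apply Cface_vset; auto.
Qed.
Definition nz : list nat := seq 1 12.
Definition adj (a b : nat) : bool := existsb (fun m => memb a (T m) && memb b (T m)) (seq 0 16).
Definition covb (m : nat) (c : list nat) : bool :=
  existsb (fun k => seteqb (T m) [0; nth k c 0; nth ((k + 1) mod 6) c 0]) (seq 0 6).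
Definition hexok (c : list nat) (i j a b : nat) : bool :=
  (length c =? 6) &&
  forallb (fun k => memb (nth k c 0) nz && adj (nth k c 0) (nth ((k + 1) mod 6) c 0) &&
     forallb (fun k' => (k =? k') || negb (nth k c 0 =? nth k' c 0)) (seq 0 6)) (seq 0 6) &&
  covb i c && covb j c && covb a c && covb b c.

Definition walks : list (list nat) :=
  flat_map (fun l0 => flat_map (fun l1 => if adj l0 l1 then
  flat_map (fun l2 => if adj l1 l2 then flat_map (fun l3 => if adj l2 l3 then
  flat_map (fun l4 => if adj l3 l4 then flat_map (fun l5 => if adj l4 l5 then
    [[l0; l1; l2; l3; l4; l5]] else []) nz else []) nz else []) nz else []) nz else []) nz) nz.

Lemma walks_complete l0 l1 l2 l3 l4 l5 :
  In l0 nz -> In l1 nz -> In l2 nz -> In l3 nz -> In l4 nz -> In l5 nz ->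
  adj l0 l1 = true -> adj l1 l2 = true -> adj l2 l3 = true -> adj l3 l4 = true ->
  adj l4 l5 = true -> In [l0; l1; l2; l3; l4; l5] walks.
Proof.
  intros H0 H1 H2 H3 H4 H5 A01 A12 A23 A34 A45. unfold walks.
  apply in_flat_map. exists l0. split; auto.
  apply in_flat_map. exists l1. split; auto. rewrite A01.
  apply in_flat_map. exists l2. split; auto. rewrite A12.
  apply in_flat_map. exists l3. split; auto. rewrite A23.
  apply in_flat_map. exists l4. split; auto. rewrite A34.
  apply in_flat_map. exists l5. split; auto. rewrite A45. left; reflexivity.
Qed.

Definition hexb (i j a b : nat) : bool :=
  existsb (fun c => if covb i c then if covb j c then if covb a c then if covb b c then
                    hexok c i j a b else false else false else false else false) walks.

Definition meetb (i j a b : nat) : bool :=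
  forallb (fun k => negb (memb k (T i ++ T j) && memb k (T a ++ T b)) || (k =? 0)) (seq 0 13).

Definition sameuno (a b c d : nat) : bool := ((a =? c) && (b =? d)) || ((a =? d) && (b =? c)).

Definition tstruct : bool :=
  forallb (fun m => forallb (fun x => forallb (fun y =>
    negb (memb x (T m) && memb y (T m) && negb (x =? 0) && negb (y =? 0) && negb (x =? y))
    || seteqb (T m) [0; x; y]) (seq 0 13)) (seq 0 13)) (seq 0 16).
Lemma tstruct_ok : tstruct = true. Proof. vm_compute. reflexivity. Qed.
Strategy expand [tstruct].

Lemma tstruct_use m x y : m < 16 -> x < 13 -> y < 13 -> In x (T m) -> In y (T m) ->
  x <> 0 -> y <> 0 -> x <> y -> seteqb (T m) [0; x; y] = true.
Proof.
  intros Hm Hx Hy Ix Iy X0 Y0 XY. pose proof tstruct_ok as E. unfold tstruct in E.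
  rewrite forallb_forall in E. specialize (E m (in_seq_lt _ _ Hm)).
  rewrite forallb_forall in E. specialize (E x (in_seq_lt _ _ Hx)).
  rewrite forallb_forall in E. specialize (E y (in_seq_lt _ _ Hy)).
  apply memb_In in Ix, Iy. apply Nat.eqb_neq in X0, Y0, XY. rewrite Ix, Iy, X0, Y0, XY in E.
  exact E.
Qed.

Lemma hexface_of A G m x y : vset A G m -> seteqb (T m) [0; x; y] = true ->
  forall w, in_face w G <-> veq w A \/ veq w (Nd A x) \/ veq w (Nd A y).
Proof.
  intros V S w. pose proof (seteqb_ok _ _ S) as S'. rewrite (V w). split.
  - intros [k [Hk E]]. apply S' in Hk. simpl in Hk.
    destruct Hk as [<-|[<-|[<-|[]]]]; [left; rewrite E; apply Nd0 | right; left; auto | right; right; auto].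
  - intros [E|[E|E]].
    + exists 0. split. apply S'. simpl; auto. rewrite E. symmetry. apply Nd0.
    + exists x. split. apply S'. simpl; auto. auto.
    + exists y. split. apply S'. simpl; auto. auto.
Qed.

Definition hexH (A : word) (c : list nat) : hexagon := (A, fun k => Nd A (nth k c 0)).

Lemma nz_spec l : In l nz <-> 1 <= l < 13.
Proof. unfold nz. rewrite in_seq. lia. Qed.

Lemma succ6 k : k < 6 -> (k + 1) mod 6 < 6 /\ (k + 1) mod 6 <> k.
Proof. intro. destruct k as [|[|[|[|[|[|k]]]]]]; simpl; try lia. Qed.

Lemma hexok_dec c i j a b : hexok c i j a b = true ->
  (forall k, k < 6 -> In (nth k c 0) nz /\ adj (nth k c 0) (nth ((k + 1) mod 6) c 0) = true /\
     forall k', k' < 6 -> k <> k' -> nth k c 0 <> nth k' c 0) /\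
  covb i c = true /\ covb j c = true /\ covb a c = true /\ covb b c = true.
Proof.
  unfold hexok. intro H. repeat rewrite andb_true_iff in H.
  destruct H as [[[[[_ H1] H2] H3] H4] H5]. repeat split; auto.
  all: rewrite forallb_forall in H1; specialize (H1 k (in_seq_lt _ _ H)).
  all: repeat rewrite andb_true_iff in H1; destruct H1 as [[Hn Ha] Hd].
  - apply memb_In, Hn.
  - exact Ha.
  - intros k' Hk' Hne E. rewrite forallb_forall in Hd. specialize (Hd k' (in_seq_lt _ _ Hk')).
    apply Nat.eqb_neq in Hne. rewrite Hne, E, Nat.eqb_refl in Hd. discriminate.
Qed.

Lemma hex_flat A c i j a b : hexok c i j a b = true -> is_flat_hexagon (hexH A c).
Proof.
  intro H. apply hexok_dec in H. destruct H as [H _].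
  unfold is_flat_hexagon, hexH. cbn [fst snd]. split; [|split].
  - intros k Hk E. destruct (H k Hk) as [Hn _]. apply nz_spec in Hn.
    assert (nth k c 0 = 0). { apply (node_dist A); try lia. rewrite E. symmetry. apply Nd0. }
    lia.
  - intros k k' Hkk Hk' E. destruct (H k ltac:(lia)) as [Hn [_ Hd]].
    destruct (H k' Hk') as [Hn' _]. apply nz_spec in Hn, Hn'.
    apply (Hd k' Hk'). lia. apply (node_dist A); try lia. exact E.
  - intros k Hk. destruct (H k Hk) as [Hn [Ha Hd]].
    destruct (succ6 k Hk) as [Hk1 Hk2]. destruct (H _ Hk1) as [Hn1 _].
    apply nz_spec in Hn, Hn1.
    unfold adj in Ha. apply existsb_exists in Ha. destruct Ha as [m [Hm Ha]].
    apply in_seq in Hm. apply andb_true_iff in Ha. destruct Ha as [Ha1 Ha2].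
    apply memb_In in Ha1, Ha2.
    exists (Cface A m). split. apply Cface_face; lia.
    unfold hex_face. cbn [fst snd]. apply (hexface_of A _ m). apply Cface_vset; lia.
    apply tstruct_use; try lia; try assumption.
    apply (Hd _ Hk1). intro e; apply Hk2; symmetry; exact e.
Qed.

Lemma hex_cov A c F m : covb m c = true -> vset A F m -> face_in_hex F (hexH A c).
Proof.
  intros Hc V. unfold covb in Hc. apply existsb_exists in Hc. destruct Hc as [k [Hk Hc]].
  apply in_seq in Hk. exists k. split. lia.
  unfold hex_face, hexH. cbn [fst snd]. apply (hexface_of A _ m); auto.
Qed.

Lemma loz_class A F1 F2 i j v : i < 16 -> j < 16 -> vset A F1 i -> vset A F2 j ->
  in_loz v (F1, F2) -> exists k, In k (T i ++ T j) /\ k < 13 /\ veq v (Nd A k).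
Proof.
  intros Hi Hj V1 V2 [H|H]; simpl in H; [apply V1 in H|apply V2 in H];
  destruct H as [k [Hk E]]; exists k; split; try (apply in_or_app; auto); split; auto;
  [apply (Tlt i)|apply (Tlt j)]; auto.
Qed.

Lemma meet_build A F1 F2 G1 G2 i j a b : i < 16 -> j < 16 -> a < 16 -> b < 16 ->
  vset A F1 i -> vset A F2 j -> vset A G1 a -> vset A G2 b -> meetb i j a b = true ->
  meet_exactly (F1, F2) (G1, G2) A.
Proof.
  intros Hi Hj Ha Hb V1 V2 W1 W2 M. unfold meet_exactly. split; [|split].
  - left. simpl. apply (A_in A F1 i); auto.
  - left. simpl. apply (A_in A G1 a); auto.
  - intros v H1 H2.
    destruct (loz_class A F1 F2 i j v Hi Hj V1 V2 H1) as [k [Hk [Hk13 E]]].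
    destruct (loz_class A G1 G2 a b v Ha Hb W1 W2 H2) as [k' [Hk' [Hk13' E']]].
    assert (k = k'). { apply (node_dist A); auto. rewrite <- E, <- E'. reflexivity. }
    subst k'. unfold meetb in M. rewrite forallb_forall in M.
    specialize (M k (in_seq_lt _ _ Hk13)). apply memb_In in Hk, Hk'. rewrite Hk, Hk' in M.
    simpl in M. apply Nat.eqb_eq in M. subst k. rewrite E. apply Nd0.
Qed.

Lemma meet_extract A F1 F2 G1 G2 i j a b : i < 16 -> j < 16 -> a < 16 -> b < 16 ->
  vset A F1 i -> vset A F2 j -> vset A G1 a -> vset A G2 b ->
  meet_exactly (F1, F2) (G1, G2) A -> meetb i j a b = true.
Proof.
  intros Hi Hj Ha Hb V1 V2 W1 W2 [_ [_ M]]. unfold meetb. apply forallb_forall.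
  intros k Hk. apply in_seq in Hk.
  destruct (memb k (T i ++ T j)) eqn:E1; destruct (memb k (T a ++ T b)) eqn:E2; simpl; auto.
  apply Nat.eqb_eq. apply memb_In in E1, E2.
  assert (E : veq (Nd A k) A).
  { apply M.
    - apply in_app_or in E1. destruct E1 as [E1|E1]; [left|right]; simpl.
      apply (vset_mem A _ _ k V1); auto. apply (vset_mem A _ _ k V2); auto.
    - apply in_app_or in E2. destruct E2 as [E2|E2]; [left|right]; simpl.
      apply (vset_mem A _ _ k W1); auto. apply (vset_mem A _ _ k W2); auto. }
  apply (node_dist A); try lia. rewrite E. symmetry. apply Nd0.
Qed.
Lemma hex_faces A (H : hexagon) : is_flat_hexagon H -> veq (fst H) A ->
  forall k, k < 6 -> exists G m, m < 16 /\ vset A G m /\ hex_face H k G.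
Proof.
  intros [_ [_ F]] Hc k Hk. destruct (F k Hk) as [G [HG HH]].
  assert (HA : in_face A G).
  { apply (in_face_veq (fst H)); auto. apply HH. left. reflexivity. }
  destruct (faces_at A G HG HA) as [m [Hm V]]. exists G, m. auto.
Qed.

Lemma hex_vcls A (H : hexagon) : is_flat_hexagon H -> veq (fst H) A ->
  forall k, k < 6 -> exists l, In l nz /\ veq (snd H k) (Nd A l).
Proof.
  intros Hf Hc k Hk. destruct (hex_faces A H Hf Hc k Hk) as [G [m [Hm [V HH]]]].
  assert (Hv : in_face (snd H k) G) by (apply HH; right; left; reflexivity).
  apply V in Hv. destruct Hv as [l [Hl E]]. exists l. split; auto.
  apply nz_spec. pose proof (Tlt m l Hm Hl). split; try lia.
  destruct l; try lia. exfalso. destruct Hf as [F1 _]. apply (F1 k Hk).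
  rewrite E, Nd0. symmetry. exact Hc.
Qed.

Lemma cov_extract A (H : hexagon) c F m : veq (fst H) A -> m < 16 -> vset A F m ->
  (forall k, k < 6 -> In (nth k c 0) nz /\ veq (snd H k) (Nd A (nth k c 0))) ->
  face_in_hex F H -> covb m c = true.
Proof.
  intros Hc Hm V Hv [k [Hk HH]]. unfold covb. apply existsb_exists. exists k.
  split. apply in_seq_lt, Hk.
  destruct (succ6 k Hk) as [Hk1 _].
  destruct (Hv k Hk) as [N1 E1]. destruct (Hv _ Hk1) as [N2 E2].
  apply nz_spec in N1, N2.
  assert (C : forall v l, l < 13 -> veq v (Nd A l) -> in_face v F -> In l (T m)).
  { intros v l Hl Ev Hvf. apply V in Hvf. destruct Hvf as [l' [Hl' E']].
    assert (Hll : l = l'). { apply (node_dist A); auto. apply (Tlt m); auto.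
      rewrite <- Ev, <- E'. reflexivity. }
    subst l'. exact Hl'. }
  unfold seteqb. apply andb_true_intro. split; apply forallb_forall; intros x Hx; apply memb_In.
  - pose proof (vset_mem A F m x V Hx) as Hxf. apply HH in Hxf. pose proof (Tlt m x Hm Hx).
    destruct Hxf as [E|[E|E]].
    + left. apply (node_dist A); try lia. rewrite E, Hc. apply Nd0.
    + right; left. apply (node_dist A); try lia. rewrite <- E1, E. reflexivity.
    + right; right; left. apply (node_dist A); try lia. rewrite <- E2, E. reflexivity.
  - destruct Hx as [<-|[<-|[<-|[]]]].
    + apply T0, Hm.
    + apply (C (snd H k)); try lia; auto. apply HH. right; left; reflexivity.
    + apply (C (snd H ((k + 1) mod 6))); try lia; auto. apply HH. right; right; reflexivity.
Qed.

Lemma hex_extract A (H : hexagon) F1 F2 G1 G2 i j a b :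
  is_flat_hexagon H -> veq (fst H) A -> i < 16 -> j < 16 -> a < 16 -> b < 16 ->
  vset A F1 i -> vset A F2 j -> vset A G1 a -> vset A G2 b ->
  face_in_hex F1 H -> face_in_hex F2 H -> face_in_hex G1 H -> face_in_hex G2 H ->
  hexb i j a b = true.
Proof.
  intros Hf Hc Hi Hj Ha Hb V1 V2 W1 W2 I1 I2 I3 I4.
  destruct (hex_vcls A H Hf Hc 0 ltac:(lia)) as [l0 [N0 E0]].
  destruct (hex_vcls A H Hf Hc 1 ltac:(lia)) as [l1 [N1 E1]].
  destruct (hex_vcls A H Hf Hc 2 ltac:(lia)) as [l2 [N2 E2]].
  destruct (hex_vcls A H Hf Hc 3 ltac:(lia)) as [l3 [N3 E3]].
  destruct (hex_vcls A H Hf Hc 4 ltac:(lia)) as [l4 [N4 E4]].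
  destruct (hex_vcls A H Hf Hc 5 ltac:(lia)) as [l5 [N5 E5]].
  set (c := [l0; l1; l2; l3; l4; l5]).
  assert (Hv : forall k, k < 6 -> In (nth k c 0) nz /\ veq (snd H k) (Nd A (nth k c 0))).
  { intros k Hk. destruct k as [|[|[|[|[|[|k]]]]]]; simpl; auto; lia. }
  assert (Had : forall k, k < 6 -> adj (nth k c 0) (nth ((k + 1) mod 6) c 0) = true).
  { intros k Hk. destruct (succ6 k Hk) as [Hk1 _].
    destruct (hex_faces A H Hf Hc k Hk) as [G [m [Hm [V HH]]]].
    destruct (Hv k Hk) as [Na Ea]. destruct (Hv _ Hk1) as [Nb Eb].
    apply nz_spec in Na, Nb.
    assert (Ga : in_face (snd H k) G) by (apply HH; right; left; reflexivity).
    assert (Gb : in_face (snd H ((k + 1) mod 6)) G) by (apply HH; right; right; reflexivity).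
    apply V in Ga, Gb. destruct Ga as [x [Hx Ex]]. destruct Gb as [y [Hy Ey]].
    assert (x = nth k c 0). { apply (node_dist A); try lia. apply (Tlt m); auto.
      rewrite <- Ex, <- Ea. reflexivity. }
    assert (y = nth ((k + 1) mod 6) c 0). { apply (node_dist A); try lia. apply (Tlt m); auto.
      rewrite <- Ey, <- Eb. reflexivity. }
    subst x y. unfold adj. apply existsb_exists. exists m. split. apply in_seq_lt, Hm.
    apply andb_true_intro; split; apply memb_In; auto. }
  assert (Hd : forall k k', k < 6 -> k' < 6 -> k <> k' -> nth k c 0 <> nth k' c 0).
  { intros k k' Hk Hk' Hne E. destruct (Hv k Hk) as [_ Ea]. destruct (Hv k' Hk') as [_ Eb].
    destruct Hf as [_ [Fd _]].
    assert (Evv : veq (snd H k) (snd H k')) by (rewrite Ea, E, <- Eb; reflexivity).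
    destruct (Nat.lt_ge_cases k k') as [Hl|Hl].
    - apply (Fd k k'); auto.
    - apply (Fd k' k); auto. lia. symmetry. auto. }
  assert (Cv1 : covb i c = true) by (apply (cov_extract A H c F1); auto).
  assert (Cv2 : covb j c = true) by (apply (cov_extract A H c F2); auto).
  assert (Cv3 : covb a c = true) by (apply (cov_extract A H c G1); auto).
  assert (Cv4 : covb b c = true) by (apply (cov_extract A H c G2); auto).
  unfold hexb. apply existsb_exists. exists c. rewrite Cv1, Cv2, Cv3, Cv4. split.
  - pose proof (Had 0) as A0. pose proof (Had 1) as A1. pose proof (Had 2) as A2.
    pose proof (Had 3) as A3. pose proof (Had 4) as A4. simpl in A0, A1, A2, A3, A4.
    apply walks_complete; auto; try apply A0; try apply A1; try apply A2; try apply A3;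
      try apply A4; try lia.
  - unfold hexok. repeat rewrite andb_true_iff. split; [split; [split; [split; [split|]|]|]|].
    + reflexivity.
    + apply forallb_forall. intros k Hk. apply in_seq in Hk.
      repeat rewrite andb_true_iff. split; [split|].
      * apply memb_In. apply Hv. lia.
      * apply Had. lia.
      * apply forallb_forall. intros k' Hk'. apply in_seq in Hk'.
        destruct (Nat.eq_dec k k') as [->|Hne]. rewrite Nat.eqb_refl. reflexivity.
        apply Nat.eqb_neq in Hne as Hne'. rewrite Hne'. simpl.
        apply negb_true_iff, Nat.eqb_neq. apply Hd; lia.
    + apply (cov_extract A H c F1); auto.
    + apply (cov_extract A H c F2); auto.
    + apply (cov_extract A H c G1); auto.
    + apply (cov_extract A H c G2); auto.
Qed.
Definition part (i j : nat) : (nat * nat * list nat) * (nat * nat * list nat) :=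
  match i, j with
  | 0, 6 => ((1,7,[1;7;2;9;3;11]),(4,10,[2;7;5;12;6;9]))
  | 1, 7 => ((0,6,[1;7;2;9;3;11]),(3,9,[1;10;4;8;3;11]))
  | 3, 9 => ((1,7,[1;10;4;8;3;11]),(4,10,[4;8;5;12;6;10]))
  | 4, 10 => ((0,6,[2;7;5;12;6;9]),(3,9,[4;8;5;12;6;10]))
  | 6, 0 => ((1,7,[1;7;2;9;3;11]),(4,10,[2;7;5;12;6;9]))
  | 7, 1 => ((0,6,[1;7;2;9;3;11]),(3,9,[1;10;4;8;3;11]))
  | 9, 3 => ((1,7,[1;10;4;8;3;11]),(4,10,[4;8;5;12;6;10]))
  | 10, 4 => ((0,6,[2;7;5;12;6;9]),(3,9,[4;8;5;12;6;10]))
  | _, _ => ((0,0,[]),(0,0,[]))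
  end.

Definition univ (i j i1 j1 i2 j2 : nat) : bool :=
  forallb (fun a => forallb (fun b =>
    if lozb a b then if meetb i j a b then if hexb i j a b then
      sameuno a b i1 j1 || sameuno a b i2 j2 else true else true else true) (seq 0 16)) (seq 0 16).

Definition check (i j : nat) : bool :=
  let '((i1, j1, c1), (i2, j2, c2)) := part i j in
  (i1 <? 16) && (j1 <? 16) && (i2 <? 16) && (j2 <? 16) && lozb i1 j1 && lozb i2 j2 &&
  negb (sameuno i1 j1 i2 j2) && meetb i j i1 j1 && meetb i j i2 j2 &&
  hexok c1 i j i1 j1 && hexok c2 i j i2 j2 && univ i j i1 j1 i2 j2.

Definition bigcheck : bool :=
  forallb (fun i => forallb (fun j => if lozb i j then check i j else true) (seq 0 16)) (seq 0 16).

Lemma bigcheck_ok : bigcheck = true. Proof. vm_compute. reflexivity. Qed.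
Strategy expand [bigcheck].

Lemma check_spec i j : i < 16 -> j < 16 -> lozb i j = true ->
  exists i1 j1 c1 i2 j2 c2, i1 < 16 /\ j1 < 16 /\ i2 < 16 /\ j2 < 16 /\
    lozb i1 j1 = true /\ lozb i2 j2 = true /\ sameuno i1 j1 i2 j2 = false /\
    meetb i j i1 j1 = true /\ meetb i j i2 j2 = true /\
    hexok c1 i j i1 j1 = true /\ hexok c2 i j i2 j2 = true /\
    (forall a b, a < 16 -> b < 16 -> lozb a b = true -> meetb i j a b = true ->
       hexb i j a b = true -> sameuno a b i1 j1 = true \/ sameuno a b i2 j2 = true).
Proof.
  intros Hi Hj L. pose proof bigcheck_ok as B. unfold bigcheck in B.
  rewrite forallb_forall in B. specialize (B i (in_seq_lt _ _ Hi)).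
  rewrite forallb_forall in B. specialize (B j (in_seq_lt _ _ Hj)).
  rewrite L in B. unfold check in B.
  destruct (part i j) as [[[i1 j1] c1] [[i2 j2] c2]].
  repeat rewrite andb_true_iff in B.
  destruct B as [[[[[[[[[[[B1 B2] B3] B4] B5] B6] B7] B8] B9] B10] B11] B12].
  exists i1, j1, c1, i2, j2, c2.
  apply Nat.ltb_lt in B1, B2, B3, B4. apply negb_true_iff in B7.
  repeat (split; auto).
  intros a b Ha Hb La Ma Xa. unfold univ in B12. rewrite forallb_forall in B12.
  specialize (B12 a (in_seq_lt _ _ Ha)). rewrite forallb_forall in B12.
  specialize (B12 b (in_seq_lt _ _ Hb)). rewrite La, Ma, Xa in B12.
  apply orb_true_iff in B12. exact B12.
Qed.

Lemma same_leq A G1 G2 a b c d : sameuno a b c d = true -> vset A G1 a -> vset A G2 b ->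
  c < 16 -> d < 16 -> leq (G1, G2) (Cface A c, Cface A d).
Proof.
  intros S V1 V2 Hc Hd. unfold sameuno in S. apply orb_true_iff in S.
  destruct S as [S|S]; apply andb_true_iff in S; destruct S as [S1 S2];
  apply Nat.eqb_eq in S1, S2; subst; unfold leq; simpl.
  - left. split. apply (feq_of_vset A _ _ c V1), Cface_vset; auto.
    apply (feq_of_vset A _ _ d V2), Cface_vset; auto.
  - right. split. apply (feq_of_vset A _ _ d V1), Cface_vset; auto.
    apply (feq_of_vset A _ _ c V2), Cface_vset; auto.
Qed.

Lemma leq_same A i1 j1 i2 j2 : i1 < 16 -> j1 < 16 -> i2 < 16 -> j2 < 16 ->
  leq (Cface A i1, Cface A j1) (Cface A i2, Cface A j2) -> sameuno i1 j1 i2 j2 = true.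
Proof.
  intros H1 H2 H3 H4 L. unfold leq in L. simpl in L. unfold sameuno.
  destruct L as [[E1 E2]|[E1 E2]].
  - apply (vset_of_feq A _ _ i1) in E1; [|apply Cface_vset; auto].
    apply (vset_of_feq A _ _ j1) in E2; [|apply Cface_vset; auto].
    rewrite (vset_unique A (Cface A i2) i1 i2), (vset_unique A (Cface A j2) j1 j2);
      auto using Cface_vset. rewrite !Nat.eqb_refl. reflexivity.
  - apply (vset_of_feq A _ _ i1) in E1; [|apply Cface_vset; auto].
    apply (vset_of_feq A _ _ j1) in E2; [|apply Cface_vset; auto].
    rewrite (vset_unique A (Cface A j2) i1 j2), (vset_unique A (Cface A i2) j1 i2);
      auto using Cface_vset. rewrite !Nat.eqb_refl. apply orb_true_r.
Qed.

Lemma partner_build A F1 F2 i j i1 j1 c : i < 16 -> j < 16 -> i1 < 16 -> j1 < 16 ->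
  vset A F1 i -> vset A F2 j -> meetb i j i1 j1 = true -> hexok c i j i1 j1 = true ->
  hex_partner (F1, F2) A (Cface A i1, Cface A j1).
Proof.
  intros Hi Hj Hi1 Hj1 V1 V2 M X. unfold hex_partner. split.
  - apply (meet_build A F1 F2 _ _ i j i1 j1); auto using Cface_vset.
  - exists (hexH A c). split. apply (hex_flat A c i j i1 j1 X).
    apply hexok_dec in X. destruct X as [_ [C1 [C2 [C3 C4]]]].
    split; split; simpl.
    + apply (hex_cov A c F1 i); auto.
    + apply (hex_cov A c F2 j); auto.
    + apply (hex_cov A c _ i1); auto using Cface_vset.
    + apply (hex_cov A c _ j1); auto using Cface_vset.
Qed.

Lemma center_in F H : face_in_hex F H -> in_face (fst H) F.
Proof. intros [k [_ HH]]. apply HH. left. reflexivity. Qed.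

Theorem lemma12 (R : lozenge) (A : word) :
  is_lozenge R -> wide_vertex R A ->
  exists R1 R2 : lozenge,
    is_lozenge R1 /\ is_lozenge R2 /\ ~ leq R1 R2 /\
    hex_partner R A R1 /\ hex_partner R A R2 /\
    (forall R' : lozenge, is_lozenge R' -> hex_partner R A R' ->
       leq R' R1 \/ leq R' R2).
Proof.
  intros HR HA.
  destruct (loz_abs R A HR HA) as (i & j & Hi & Hj & Vi & Vj & Lij).
  destruct (check_spec i j Hi Hj Lij) as
    (i1 & j1 & c1 & i2 & j2 & c2 & Hi1 & Hj1 & Hi2 & Hj2 & L1 & L2 & Sd & M1 & M2 & X1 & X2 & All).
  destruct R as [F1 F2]. simpl in Vi, Vj.
  exists (Cface A i1, Cface A j1), (Cface A i2, Cface A j2).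
  split. apply loz_conc; auto.
  split. apply loz_conc; auto.
  split. { intro L. apply leq_same in L; auto. congruence. }
  split. apply (partner_build A F1 F2 i j i1 j1 c1); auto.
  split. apply (partner_build A F1 F2 i j i2 j2 c2); auto.
  intros [G1 G2] HR' [Hm [H [Hf [[In1 In2] [In3 In4]]]]].
  assert (Hc : veq (fst H) A).
  { destruct Hm as [_ [_ Hm]]. apply Hm.
    - left. apply center_in, In1.
    - left. apply center_in, In3. }
  assert (HA' : wide_vertex (G1, G2) A).
  { split; simpl; apply (in_face_veq (fst H)); auto; apply center_in; auto. }
  destruct (loz_abs (G1, G2) A HR' HA') as (a & b & Ha & Hb & Wa & Wb & Lab).
  simpl in Wa, Wb.
  assert (Mab : meetb i j a b = true) by (apply (meet_extract A F1 F2 G1 G2); auto).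
  assert (Xab : hexb i j a b = true) by (apply (hex_extract A H F1 F2 G1 G2); auto).
  destruct (All a b Ha Hb Lab Mab Xab) as [S|S]; [left|right];
    apply (same_leq A G1 G2 a b); auto.
Qed.
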